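(* Assume conditions (C1)–(C5). If $\zeta,\tilde\zeta\in\Theta$ satisfy $\limsup_{k\to\infty}\|\zeta_k-\tilde\zeta_k\|>0$, then there exist numbers $\epsilon_0>0$, $\epsilon_1>0$ and infinitely many pairwise disjoint intervals $J_q\subset\mathbb T_0$, $q\in\mathbb N$, each of length at least $\epsilon_1$, such that $\|\varphi_\zeta(t)-\varphi_{\tilde\zeta}(t)\|>\epsilon_0$ for all $t\in\bigcup_qJ_q$ (i.e. the pair $\varphi_\zeta,\varphi_{\tilde\zeta}$ is frequently $(\epsilon_0,\epsilon_1)$-separated).
   Context: Fix integers $m,n\ge1$ and $r\ge0$. Cells are indexed by pairs $(i,j)$, $1\le i\le m$, $1\le j\le n$. The $r$-neighbourhood of $(i,j)$ is $N_r(i,j)=\{(h,l):1\le h\le m,\ 1\le l\le n,\ \max(|h-i|,|l-j|)\le r\}$. Fix constants $a_{ij}>0$, $C^{hl}_{ij}\ge0$, and a continuous function $f:\mathbb R\to\mathbb R$. Vectors of $\mathbb R^{mn}$ are written $v=\{v_{ij}\}$, with norm $\|v\|=\max_{(i,j)}|v_{ij}|$. Time scale: $\{\theta_k\}_{k\in\mathbb Z}$ is strictly increasing, $\theta_{-1}<0<\theta_0$, and there exist $\omega>0$ and $p\in\mathbb N$ with $\theta_{k+2p}=\theta_k+\omega$ for all $k$. Set $\mathbb T_0=\bigcup_{k\in\mathbb Z}[\theta_{2k-1},\theta_{2k}]$, $\delta_k=\theta_{2k+1}-\theta_{2k}$, $\eta_k=\theta_{2k}-\theta_{2k-1}$ (both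 $p$-periodic in $k$), $\delta=\max_{1\le k\le p}\delta_k$. On $\mathbb T_0'=\mathbb T_0\setminus\{\theta_{2k-1}:k\in\mathbb Z\}$ define $\psi(t)=t-\sum_{0<\theta_{2k}<t}\delta_k$ for $t\ge0$ and $\psi(t)=t+\sum_{t\le\theta_{2k}<0}\delta_k$ for $t<0$; put $s_k=\psi(\theta_{2k})$, so $s_k-s_{k-1}=\eta_k$, and write $\psi(\omega):=\omega-\sum_{k=1}^p\delta_k=\sum_{k=1}^p\eta_k$. Inputs: $\Lambda\subset\mathbb R^{mn}$ is compact and $F:\Lambda\to\Lambda$ is continuous. $\Theta$ is the set of all sequences $\zeta=\{\zeta_k\}_{k\in\mathbb Z}$, $\zeta_k=\{\zeta^{ij}_k\}\in\Lambda$, with $\zeta_{k+1}=F(\zeta_k)$ for all $k\in\mathbb Z$. For $\zeta\in\Theta$, $L_{ij}(t,\zeta)=\zeta^{ij}_k$ for $t\in[\theta_{2k-1},\theta_{2k}]$. Network $(N_\zeta)$ on $\mathbb T_0$: $x^\Delta_{ij}(t)=-a_{ij}x_{ij}(t)-\sum_{(h,l)\in N_r(i,j)}C^{hl}_{ij}f(x_{hl}(t))x_{ij}(t)+L_{ij}(t,\zeta)$, $t\in\mathbb T_0$, where the $\Delta$-derivative at $\theta_{2k}$ is $(x(\theta_{2k+1})-x(\theta_{2k}))/\delta_k$ and elsewhere the ordinary derivative. Concretely, a solution on $\mathbb T_0$ is a function continuous and (one-sidedly at endpoints) differentiable on each $[\theta_{2k-1},\theta_{2k}]$ satisfying there $x_{ij}'=-a_{ij}x_{ij}-\sum_{(h,l)\in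 N_r(i,j)}C^{hl}_{ij}f(x_{hl})x_{ij}+\zeta^{ij}_k$, together with $x_{ij}(\theta_{2k+1})=(1-\delta_ka_{ij})x_{ij}(\theta_{2k})-\delta_k\sum_{(h,l)\in N_r(i,j)}C^{hl}_{ij}f(x_{hl}(\theta_{2k}))x_{ij}(\theta_{2k})+\delta_k\zeta^{ij}_k$. Impulsive system $(I_\zeta)$: for $s\in(s_{k-1},s_k)$, $y_{ij}'(s)=-a_{ij}y_{ij}(s)-\sum_{(h,l)\in N_r(i,j)}C^{hl}_{ij}f(y_{hl}(s))y_{ij}(s)+\zeta^{ij}_k$, and at $s=s_k$, $y_{ij}(s_k+)-y_{ij}(s_k)=-\delta_ka_{ij}y_{ij}(s_k)-\delta_k\sum_{(h,l)\in N_r(i,j)}C^{hl}_{ij}f(y_{hl}(s_k))y_{ij}(s_k)+\delta_k\zeta^{ij}_k$. Solutions are left-continuous, continuous except for discontinuities of the first kind at the $s_k$. Let $u_{ij}(s,\tau)=e^{-a_{ij}(s-\tau)}\prod_{\nu=l}^{k}(1-\delta_\nu a_{ij})$ if $s_{l-1}<\tau\le s_l$, $s_k<s\le s_{k+1}$, $k\ge l$, and $u_{ij}(s,\tau)=e^{-a_{ij}(s-\tau)}$ if $s_k<\tau\le s\le s_{k+1}$. Let $\lambda_{ij}=a_{ij}-\frac1{\psi(\omega)}\sum_{\nu=0}^{p-1}\ln|1-\delta_\nu a_{ij}|$, $\lambda=\min_{(i,j)}\lambda_{ij}$. Conditions: (C1) $\delta_ka_{ij}\ne1$ for all $i,j,k$;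 (C2) $\lambda>0$; (C3) $\sup_{s\in\mathbb R}|f(s)|\le M_f$ for some $M_f>0$; (C4) $|f(s_1)-f(s_2)|\le L_f|s_1-s_2|$ for all $s_1,s_2$, for some $L_f>0$. Under (C1),(C2) fix positive numbers $K_{ij}$ with $|u_{ij}(s,\tau)|\le K_{ij}e^{-\lambda_{ij}(s-\tau)}$ for $s\ge\tau$. Define $\bar c=\max_{(i,j)}\big(\frac{K_{ij}}{\lambda_{ij}}+\frac{p\delta K_{ij}}{1-e^{-\lambda_{ij}\psi(\omega)}}\big)\sum_{(h,l)\in N_r(i,j)}C^{hl}_{ij}$, $M_F=\max_{\eta\in\Lambda}\|F(\eta)\|$, $H_0=\frac{M_F}{1-M_f\bar c}\max_{(i,j)}\big(\frac{K_{ij}}{\lambda_{ij}}+\frac{p\delta K_{ij}}{1-e^{-\lambda_{ij}\psi(\omega)}}\big)$. (C5) $(M_f+H_0L_f)\bar c<1$. Under (C1)–(C5), for $\zeta\in\Theta$ the system $(I_\zeta)$ has a unique solution $\phi_\zeta$ on $\mathbb R$ with $\sup_s\|\phi_\zeta(s)\|\le H_0$; define $\varphi_\zeta:\mathbb T_0\to\mathbb R^{mn}$ by $\varphi_\zeta(t)=\phi_\zeta(\psi(t))$ for $t\in\mathbb T_0'$ and $\varphi_\zeta(\theta_{2k+1})=\phi_\zeta(s_k+)$. Then $\varphi_\zeta$ is the unique solution of $(N_\zeta)$ on $\mathbb T_0$ with $\sup_{t\in\mathbb T_0}\|\varphi_\zeta(t)\|\le H_0$. *)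

(* Defs.v *)
From Stdlib Require Import Reals Lra Lia ZArith List.
Import ListNotations.
Open Scope R_scope.

(** Vectors of R^{mn}: functions on index pairs (i,j); only cells
    1<=i<=m, 1<=j<=n matter.  Elements of Lambda are required to vanish
    off the cells, so that Lambda is literally a subset of R^{mn}. *)
Definition vec := nat -> nat -> R.

Definition is_cell (m n i j : nat) : Prop := (1 <= i <= m)%nat /\ (1 <= j <= n)%nat.

Definition supported (m n : nat) (v : vec) : Prop :=
  forall i j, ~ is_cell m n i j -> v i j = 0.

Definition cells (m n : nat) : list (nat * nat) := list_prod (seq 1 m) (seq 1 n).

Definition max_cells (m n : nat) (g : nat -> nat -> R) : R :=
  fold_right Rmax 0 (map (fun c => g (fst c) (snd c)) (cells m n)).

Definition vnorm (m n : nat) (v : vec) : R := max_cells m n (fun i j => Rabs (v i j)).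

Definition vsub (v w : vec) : vec := fun i j => v i j - w i j.

Definition in_nbhd (r i j h l : nat) : bool :=
  Nat.leb (Nat.max (Nat.max (h - i) (i - h)) (Nat.max (l - j) (j - l))) r.

Definition nb_sum (m n r i j : nat) (g : nat -> nat -> R) : R :=
  fold_right Rplus 0
    (map (fun c => if in_nbhd r i j (fst c) (snd c) then g (fst c) (snd c) else 0)
         (cells m n)).

Definition zsum (a : Z) (len : nat) (g : Z -> R) : R :=
  fold_right Rplus 0 (map (fun i => g (a + Z.of_nat i)%Z) (seq 0 len)).
Definition zprod (a : Z) (len : nat) (g : Z -> R) : R :=
  fold_right Rmult 1 (map (fun i => g (a + Z.of_nat i)%Z) (seq 0 len)).

Definition time_scale (theta : Z -> R) (omega : R) (p : nat) : Prop :=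
  (forall k1 k2 : Z, (k1 < k2)%Z -> theta k1 < theta k2) /\
  theta (-1)%Z < 0 < theta 0%Z /\
  0 < omega /\
  (forall k : Z, theta (k + 2 * Z.of_nat p)%Z = theta k + omega).

Definition dlt (theta : Z -> R) (k : Z) : R := theta (2 * k + 1)%Z - theta (2 * k)%Z.
Definition eta (theta : Z -> R) (k : Z) : R := theta (2 * k)%Z - theta (2 * k - 1)%Z.

Definition dmax (theta : Z -> R) (p : nat) : R :=
  fold_right Rmax 0 (map (fun k => dlt theta (Z.of_nat k)) (seq 1 p)).

Definition psi_omega (theta : Z -> R) (p : nat) : R := zsum 1 p (eta theta).

Definition inT0 (theta : Z -> R) (t : R) : Prop :=
  exists k : Z, theta (2 * k - 1)%Z <= t <= theta (2 * k)%Z.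

(** s_k = psi(theta_{2k}):  for k>=0 the theta_{2j} in (0, theta_{2k}) are
    j = 0..k-1; for k<0 the theta_{2j} in [theta_{2k},0) are j = k..-1. *)
Definition s_ (theta : Z -> R) (k : Z) : R :=
  if Z.leb 0 k then theta (2 * k)%Z - zsum 0 (Z.to_nat k) (dlt theta)
  else theta (2 * k)%Z + zsum k (Z.to_nat (- k)) (dlt theta).

Definition lam_of (theta : Z -> R) (p : nat) (aij : R) : R :=
  aij - / psi_omega theta p * zsum 0 p (fun nu => ln (Rabs (1 - dlt theta nu * aij))).

(** |u_ij(s,tau)| <= K e^{-lambda (s - tau)} for all s >= tau, written out
    according to the two cases of the definition of u_ij. *)
Definition u_bound (theta : Z -> R) (aij K lam : R) : Prop :=
  (forall (k l : Z) (s tau : R), (l <= k)%Z ->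
     s_ theta (l - 1) < tau <= s_ theta l ->
     s_ theta k < s <= s_ theta (k + 1) ->
     Rabs (exp (- aij * (s - tau)) *
           zprod l (Z.to_nat (k - l + 1)) (fun nu => 1 - dlt theta nu * aij))
       <= K * exp (- lam * (s - tau))) /\
  (forall (k : Z) (s tau : R),
     s_ theta k < tau -> tau <= s -> s <= s_ theta (k + 1) ->
     Rabs (exp (- aij * (s - tau))) <= K * exp (- lam * (s - tau))).

Definition compact_set (m n : nat) (L : vec -> Prop) : Prop :=
  forall u : nat -> vec, (forall k, L (u k)) ->
  exists (phi : nat -> nat) (v : vec),
    (forall k, (phi k < phi (S k))%nat) /\ L v /\
    forall eps, 0 < eps -> exists N, forall k, (N <= k)%nat ->
      vnorm m n (vsub (u (phi k)) v) < eps.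

Definition continuous_on_set (m n : nat) (L : vec -> Prop) (F : vec -> vec) : Prop :=
  forall v, L v -> forall eps, 0 < eps -> exists d, 0 < d /\
    forall w, L w -> vnorm m n (vsub w v) < d -> vnorm m n (vsub (F w) (F v)) < eps.

Definition in_Theta (L : vec -> Prop) (F : vec -> vec) (zeta : Z -> vec) : Prop :=
  forall k : Z, L (zeta k) /\ zeta (k + 1)%Z = F (zeta k).

Definition deriv_within (a b : R) (g : R -> R) (t l : R) : Prop :=
  forall eps, 0 < eps -> exists d, 0 < d /\
    forall h, h <> 0 -> Rabs h < d -> a <= t + h <= b ->
      Rabs ((g (t + h) - g t) / h - l) < eps.

Definition solves_N (m n r : nat) (a : nat -> nat -> R) (C : nat -> nat -> nat -> nat -> R)
  (f : R -> R) (theta : Z -> R) (zeta : Z -> vec) (x : R -> vec) : Prop :=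
  forall (k : Z) (i j : nat), is_cell m n i j ->
    (forall t, theta (2 * k - 1)%Z <= t <= theta (2 * k)%Z ->
       deriv_within (theta (2 * k - 1)%Z) (theta (2 * k)%Z) (fun s => x s i j) t
         (- a i j * x t i j
          - nb_sum m n r i j (fun h l => C i j h l * f (x t h l) * x t i j)
          + zeta k i j)) /\
    x (theta (2 * k + 1)%Z) i j =
      (1 - dlt theta k * a i j) * x (theta (2 * k)%Z) i j
      - dlt theta k * nb_sum m n r i j
          (fun h l => C i j h l * f (x (theta (2 * k)%Z) h l) * x (theta (2 * k)%Z) i j)
      + dlt theta k * zeta k i j.

Definition kfac (theta : Z -> R) (p : nat) (a K : nat -> nat -> R) (i j : nat) : R :=
  let lam := lam_of theta p (a i j) in
  K i j / lam + INR p * dmax theta p * K i j / (1 - exp (- lam * psi_omega theta p)).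

Definition cbar (m n r : nat) (theta : Z -> R) (p : nat) (a K : nat -> nat -> R)
  (C : nat -> nat -> nat -> nat -> R) : R :=
  max_cells m n (fun i j => kfac theta p a K i j * nb_sum m n r i j (fun h l => C i j h l)).

Definition H0 (m n r : nat) (theta : Z -> R) (p : nat) (a K : nat -> nat -> R)
  (C : nat -> nat -> nat -> nat -> R) (Mf MF : R) : R :=
  MF / (1 - Mf * cbar m n r theta p a K C) * max_cells m n (kfac theta p a K).

(* Main.v *)
Require Import Defs.
From Stdlib Require Import Reals ZArith List Lra Lia Classical ClassicalEpsilon.
From Coquelicot Require Import Coquelicot.
Open Scope R_scope.

Lemma in_cells m n i j : is_cell m n i j <-> In (i,j) (cells m n).
Proof. unfold cells, is_cell. rewrite in_prod_iff, !in_seq. split; intros; lia. Qed.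

Lemma fold_Rmax_ge0 l : 0 <= fold_right Rmax 0 l.
Proof. induction l; simpl; [lra|]. eapply Rle_trans; [exact IHl| apply Rmax_r]. Qed.

Lemma fold_Rmax_in l x : In x l -> x <= fold_right Rmax 0 l.
Proof.
  induction l; simpl; intros H; [contradiction|]. destruct H as [H|H].
  - subst; apply Rmax_l.
  - eapply Rle_trans; [apply IHl; auto| apply Rmax_r].
Qed.

Lemma fold_Rmax_gt l c : 0 <= c -> c < fold_right Rmax 0 l -> exists x, In x l /\ c < x.
Proof.
  induction l; simpl; intros H0 H; [lra|].
  destruct (Rle_dec a (fold_right Rmax 0 l)).
  - rewrite Rmax_right in H by auto. destruct (IHl H0 H) as [x [Hx Hc]]. exists x; auto.
  - rewrite Rmax_left in H by lra. exists a; auto.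
Qed.

Lemma fold_Rmax_le l c : 0 <= c -> (forall x, In x l -> x <= c) -> fold_right Rmax 0 l <= c.
Proof.
  induction l; simpl; intros H0 H; [lra|]. apply Rmax_lub; auto.
Qed.

Lemma max_cells_ge0 m n g : 0 <= max_cells m n g.
Proof. apply fold_Rmax_ge0. Qed.

Lemma max_cells_ge m n g i j : is_cell m n i j -> g i j <= max_cells m n g.
Proof.
  intros H. apply fold_Rmax_in. apply in_map_iff. exists (i,j); split; [reflexivity|].
  apply in_cells; auto.
Qed.

Lemma vnorm_ge m n v i j : is_cell m n i j -> Rabs (v i j) <= vnorm m n v.
Proof. intros; unfold vnorm; apply (max_cells_ge m n (fun i j => Rabs (v i j))); auto. Qed.

Lemma vnorm_ge0 m n v : 0 <= vnorm m n v.
Proof. apply max_cells_ge0. Qed.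

Lemma vnorm_gt m n v c : 0 <= c -> c < vnorm m n v ->
  exists i j, is_cell m n i j /\ c < Rabs (v i j).
Proof.
  intros H0 H. destruct (fold_Rmax_gt _ _ H0 H) as [x [Hx Hc]].
  apply in_map_iff in Hx. destruct Hx as [[i j] [Hx Hin]]. simpl in Hx. subst.
  exists i, j; split; auto. apply in_cells; auto.
Qed.

Lemma nb_bound m n r i j G H :
  (forall h l, is_cell m n h l -> Rabs (G h l) <= H h l) ->
  Rabs (nb_sum m n r i j G) <= nb_sum m n r i j H.
Proof.
  intros HG. unfold nb_sum.
  assert (Hc : forall c, In c (cells m n) -> Rabs (G (fst c) (snd c)) <= H (fst c) (snd c)).
  { intros [h l] Hin. apply HG. apply in_cells; auto. }
  revert Hc. generalize (cells m n) as L. induction L as [|c L IH]; simpl; intros Hc.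
  - rewrite Rabs_R0; lra.
  - eapply Rle_trans; [apply Rabs_triang|]. apply Rplus_le_compat.
    + destruct (in_nbhd r i j (fst c) (snd c)); [apply Hc; left; auto| rewrite Rabs_R0; lra].
    + apply IH; intros; apply Hc; right; auto.
Qed.

Lemma nb_scal m n r i j H W :
  nb_sum m n r i j (fun h l => H h l * W) = nb_sum m n r i j H * W.
Proof.
  unfold nb_sum. generalize (cells m n) as L. induction L as [|c L IH]; simpl; [ring|].
  rewrite IH. destruct (in_nbhd r i j (fst c) (snd c)); ring.
Qed.

Lemma nb_minus m n r i j G1 G2 :
  nb_sum m n r i j G1 - nb_sum m n r i j G2 = nb_sum m n r i j (fun h l => G1 h l - G2 h l).
Proof.
  unfold nb_sum. generalize (cells m n) as L. induction L as [|c L IH]; simpl; [ring|].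
  rewrite <- IH. destruct (in_nbhd r i j (fst c) (snd c)); ring.
Qed.

Definition clamp (u v t : R) := Rmax u (Rmin v t).

Lemma clamp_lip u v s t : u <= v -> Rabs (clamp u v s - clamp u v t) <= Rabs (s - t).
Proof.
  intros. unfold clamp, Rmax, Rmin.
  repeat destruct Rle_dec; unfold Rabs; repeat destruct Rcase_abs; lra.
Qed.

Lemma clamp_in u v t : u <= v -> u <= clamp u v t <= v.
Proof. intros. unfold clamp, Rmax, Rmin. repeat destruct Rle_dec; lra. Qed.

Lemma clamp_id u v t : u <= t <= v -> clamp u v t = t.
Proof. intros. unfold clamp, Rmax, Rmin. repeat destruct Rle_dec; lra. Qed.

Lemma dw_cont a b g t l : a <= t <= b -> deriv_within a b g t l ->
  forall eps, 0 < eps -> exists d, 0 < d /\ forall s, a <= s <= b -> Rabs (s - t) < d ->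
    Rabs (g s - g t) < eps.
Proof.
  intros Ht Hd eps Heps. destruct (Hd 1 Rlt_0_1) as [d [Hd0 Hdd]].
  exists (Rmin d (eps / (Rabs l + 1))). split.
  { apply Rmin_pos; auto. apply Rdiv_lt_0_compat; auto. pose proof (Rabs_pos l); lra. }
  intros s Hs Hst. destruct (Req_dec s t) as [E|E].
  { subst. rewrite Rminus_diag, Rabs_R0; auto. }
  assert (Hh : s - t <> 0) by lra.
  assert (Hlt := Hdd (s - t) Hh (Rlt_le_trans _ _ _ Hst (Rmin_l _ _))).
  replace (t + (s - t)) with s in Hlt by ring. specialize (Hlt Hs).
  assert (Hq : Rabs ((g s - g t) / (s - t)) < Rabs l + 1).
  { pose proof (Rabs_triang_inv ((g s - g t) / (s - t)) l). lra. }
  replace (g s - g t) with ((g s - g t) / (s - t) * (s - t)) by (field; auto).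
  rewrite Rabs_mult.
  assert (Hst2 : Rabs (s - t) < eps / (Rabs l + 1)) by (eapply Rlt_le_trans; [exact Hst| apply Rmin_r]).
  assert (0 < Rabs (s - t)) by (apply Rabs_pos_lt; auto).
  assert (Hp : 0 < Rabs l + 1) by (pose proof (Rabs_pos l); lra).
  apply Rle_lt_trans with ((Rabs l + 1) * Rabs (s - t)).
  { apply Rmult_le_compat_r; lra. }
  apply Rlt_le_trans with ((Rabs l + 1) * (eps / (Rabs l + 1))).
  { apply Rmult_lt_compat_l; auto. }
  right; field; lra.
Qed.

Lemma dw_ub a b g l M u v :
  (forall t, a <= t <= b -> deriv_within a b g t (l t)) ->
  (forall t, a <= t <= b -> l t <= M) ->
  a <= u -> u <= v -> v <= b -> g v - g u <= M * (v - u).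
Proof.
  intros Hd HM Hau Huv Hvb.
  destruct (Req_dec u v) as [E|E]. { subst. lra. }
  set (g' := fun s => g (clamp u v s)).
  assert (Hc : forall x, Rmin u v <= x <= Rmax u v -> continuity_pt g' x).
  { intros x _. unfold continuity_pt, continue_in, limit1_in, limit_in. intros eps Heps.
    assert (Hx := clamp_in u v x Huv).
    assert (Hx2 : a <= clamp u v x <= b) by lra.
    destruct (dw_cont a b g (clamp u v x) (l (clamp u v x)) Hx2
      (Hd _ Hx2) eps Heps) as [d [Hd0 Hdd]].
    exists d; split; auto. intros x0 [_ Hx0]. simpl in *. unfold R_dist in *. unfold g'.
    apply Hdd. { pose proof (clamp_in u v x0 Huv); lra. }
    eapply Rle_lt_trans; [apply clamp_lip; auto| auto]. }
  assert (Hder : forall x, Rmin u v < x < Rmax u v -> is_derive g' x (l x)).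
  { rewrite Rmin_left in * by lra. rewrite Rmax_right in * by lra.
    intros x Hx. apply is_derive_Reals. intros eps Heps.
    destruct (Hd x ltac:(lra) eps Heps) as [d [Hd0 Hdd]].
    assert (Hpos : 0 < Rmin d (Rmin (x - u) (v - x))).
    { apply Rmin_pos; auto. apply Rmin_pos; lra. }
    exists (mkposreal _ Hpos). intros h Hh Hhd. simpl in Hhd.
    assert (Hh1 : Rabs h < d) by (eapply Rlt_le_trans; [exact Hhd| apply Rmin_l]).
    assert (Hh2 : Rabs h < Rmin (x - u) (v - x)) by (eapply Rlt_le_trans; [exact Hhd| apply Rmin_r]).
    assert (Hh3 : Rabs h < x - u) by (eapply Rlt_le_trans; [exact Hh2| apply Rmin_l]).
    assert (Hh4 : Rabs h < v - x) by (eapply Rlt_le_trans; [exact Hh2| apply Rmin_r]).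
    assert (-(Rabs h) <= h <= Rabs h) by (split; [pose proof (Rabs_pos h); unfold Rabs in *; destruct Rcase_abs; lra| apply Rle_abs]).
    unfold g'. rewrite !clamp_id by lra. apply Hdd; auto; lra. }
  destruct (MVT_gen g' u v l Hder Hc) as [c [Hc1 Hc2]].
  rewrite Rmin_left in Hc1 by lra. rewrite Rmax_right in Hc1 by lra.
  unfold g' in Hc2. rewrite !clamp_id in Hc2 by lra. rewrite Hc2.
  apply Rmult_le_compat_r; [lra|]. apply HM; lra.
Qed.
Lemma Rabs_sub_le u v : Rabs (u - v) <= Rabs u + Rabs v.
Proof. unfold Rminus. eapply Rle_trans; [apply Rabs_triang|]. rewrite Rabs_Ropp. lra. Qed.

Lemma dw_minus a b g1 g2 t l1 l2 : deriv_within a b g1 t l1 -> deriv_within a b g2 t l2 ->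
  deriv_within a b (fun s => g1 s - g2 s) t (l1 - l2).
Proof.
  intros H1 H2 eps Heps.
  destruct (H1 (eps/2) ltac:(lra)) as [d1 [Hd1 H1']].
  destruct (H2 (eps/2) ltac:(lra)) as [d2 [Hd2 H2']].
  exists (Rmin d1 d2); split; [apply Rmin_pos; auto|].
  intros h Hh Hhd Hab.
  assert (A1 := H1' h Hh (Rlt_le_trans _ _ _ Hhd (Rmin_l _ _)) Hab).
  assert (A2 := H2' h Hh (Rlt_le_trans _ _ _ Hhd (Rmin_r _ _)) Hab).
  replace ((g1 (t + h) - g2 (t + h) - (g1 t - g2 t)) / h - (l1 - l2)) with
    (((g1 (t + h) - g1 t) / h - l1) - ((g2 (t + h) - g2 t) / h - l2)) by (field; auto).
  eapply Rle_lt_trans; [apply Rabs_triang|]. rewrite Rabs_Ropp. lra.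
Qed.

Lemma dw_opp a b g t l : deriv_within a b g t l ->
  deriv_within a b (fun s => - g s) t (- l).
Proof.
  intros H1 eps Heps. destruct (H1 eps Heps) as [d [Hd H']]. exists d; split; auto.
  intros h Hh Hhd Hab. specialize (H' h Hh Hhd Hab).
  replace ((- g (t + h) - - g t) / h - - l) with (- ((g (t + h) - g t) / h - l)) by (field; auto).
  rewrite Rabs_Ropp; auto.
Qed.

Lemma dw_lb a b g l M u v :
  (forall t, a <= t <= b -> deriv_within a b g t (l t)) ->
  (forall t, a <= t <= b -> M <= l t) ->
  a <= u -> u <= v -> v <= b -> M * (v - u) <= g v - g u.
Proof.
  intros Hd HM Hau Huv Hvb.
  assert (H := dw_ub a b (fun s => - g s) (fun t => - l t) (- M) u v
    (fun t Ht => dw_opp _ _ _ _ _ (Hd t Ht)) (fun t Ht => Ropp_le_contravar _ _ (HM t Ht))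
    Hau Huv Hvb).
  simpl in H. lra.
Qed.

Lemma dw_lip a b g l L s t :
  (forall t, a <= t <= b -> deriv_within a b g t (l t)) ->
  (forall t, a <= t <= b -> Rabs (l t) <= L) ->
  a <= s <= b -> a <= t <= b -> Rabs (g s - g t) <= L * Rabs (s - t).
Proof.
  intros Hd HL Hs Ht.
  assert (HU : forall t, a <= t <= b -> l t <= L) by (intros; specialize (HL t0 H); apply Rabs_le_between in HL; lra).
  assert (HLw : forall t, a <= t <= b -> - L <= l t) by (intros; specialize (HL t0 H); apply Rabs_le_between in HL; lra).
  destruct (Rle_dec s t).
  - assert (H1 := dw_ub a b g l L s t Hd HU ltac:(lra) r ltac:(lra)).
    assert (H2 := dw_lb a b g l (-L) s t Hd HLw ltac:(lra) r ltac:(lra)).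
    rewrite (Rabs_left1 (s - t)) by lra. apply Rabs_le. lra.
  - apply Rnot_le_lt in n.
    assert (H1 := dw_ub a b g l L t s Hd HU ltac:(lra) ltac:(lra) ltac:(lra)).
    assert (H2 := dw_lb a b g l (-L) t s Hd HLw ltac:(lra) ltac:(lra) ltac:(lra)).
    rewrite (Rabs_right (s - t)) by lra. apply Rabs_le. lra.
Qed.

Section TS.
Variables (theta : Z -> R) (omega : R) (p : nat).
Hypothesis Hts : time_scale theta omega p.

Lemma ts_p : (1 <= p)%nat.
Proof.
  destruct Hts as [_ [_ [Hom Hper]]]. destruct p; [|lia].
  specialize (Hper 0%Z). simpl in Hper. lra.
Qed.

Lemma th_lt k1 k2 : (k1 < k2)%Z -> theta k1 < theta k2.
Proof. destruct Hts as [H _]; auto. Qed.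

Lemma th_le k1 k2 : (k1 <= k2)%Z -> theta k1 <= theta k2.
Proof. intros H. destruct (Z.eq_dec k1 k2); [subst; lra| left; apply th_lt; lia]. Qed.

Lemma eta_pos k : 0 < eta theta k.
Proof. unfold eta. assert (H := th_lt (2*k-1) (2*k) ltac:(lia)). lra. Qed.

Lemma eta_per k : eta theta (k + Z.of_nat p) = eta theta k.
Proof.
  destruct Hts as [_ [_ [_ Hper]]]. unfold eta.
  replace (2 * (k + Z.of_nat p))%Z with (2 * k + 2 * Z.of_nat p)%Z by ring.
  replace (2 * k + 2 * Z.of_nat p - 1)%Z with ((2 * k - 1) + 2 * Z.of_nat p)%Z by ring.
  rewrite !Hper. ring.
Qed.

Lemma eta_pern r (N : nat) : eta theta (r + Z.of_nat N * Z.of_nat p) = eta theta r.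
Proof.
  induction N. { simpl. rewrite Z.add_0_r. auto. }
  rewrite Nat2Z.inj_succ.
  replace (r + Z.succ (Z.of_nat N) * Z.of_nat p)%Z with ((r + Z.of_nat N * Z.of_nat p) + Z.of_nat p)%Z by ring.
  rewrite eta_per; auto.
Qed.

Lemma fold_Rmin_le l x0 y : In y l -> fold_right Rmin x0 l <= y.
Proof.
  induction l; simpl; intros H; [contradiction|]. destruct H as [H|H].
  - subst; apply Rmin_l.
  - eapply Rle_trans; [apply Rmin_r| auto].
Qed.

Lemma fold_Rmin_pos l x0 : 0 < x0 -> (forall y, In y l -> 0 < y) -> 0 < fold_right Rmin x0 l.
Proof.
  induction l; simpl; intros H0 H; auto. apply Rmin_pos; auto.
Qed.

Lemma eta_lb : exists em, 0 < em /\ forall k, em <= eta theta k.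
Proof.
  exists (fold_right Rmin (eta theta 0) (map (fun i => eta theta (Z.of_nat i)) (seq 0 p))).
  split.
  { apply fold_Rmin_pos; [apply eta_pos|]. intros y Hy. apply in_map_iff in Hy.
    destruct Hy as [i [Hi _]]; subst; apply eta_pos. }
  intros k. assert (Hp := ts_p). set (P := Z.of_nat p).
  assert (HP : (0 < P)%Z) by lia.
  assert (Hm := Z.mod_pos_bound k P HP).
  assert (Hdm := Z.div_mod k P ltac:(lia)).
  assert (E : eta theta k = eta theta (k mod P)).
  { destruct (Z_le_gt_dec 0 (k / P)).
    - rewrite <- (eta_pern (k mod P) (Z.to_nat (k / P))). f_equal.
      rewrite Z2Nat.id by lia. fold P. lia.
    - rewrite <- (eta_pern k (Z.to_nat (- (k / P)))). f_equal.
      rewrite Z2Nat.id by lia. fold P. lia. }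
  rewrite E. apply fold_Rmin_le. apply in_map_iff. exists (Z.to_nat (k mod P)).
  split; [rewrite Z2Nat.id by lia; auto|]. apply in_seq. lia.
Qed.

Lemma int_disj k1 k2 t : (k1 < k2)%Z -> theta (2*k1-1) <= t <= theta (2*k1) ->
  theta (2*k2-1) <= t <= theta (2*k2) -> False.
Proof.
  intros Hk H1 H2. assert (H := th_lt (2*k1) (2*k2-1) ltac:(lia)). lra.
Qed.
End TS.
Theorem lemma4
  (m n r : nat) (a : nat -> nat -> R) (C : nat -> nat -> nat -> nat -> R) (f : R -> R)
  (theta : Z -> R) (omega : R) (p : nat)
  (Lam : vec -> Prop) (F : vec -> vec) (MF Mf Lf : R) (K : nat -> nat -> R)
  (zeta zeta' : Z -> vec) (x x' : R -> vec)
  (Hm : (1 <= m)%nat) (Hn : (1 <= n)%nat)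
  (Ha : forall i j, is_cell m n i j -> 0 < a i j)
  (HC : forall i j h l, is_cell m n i j -> is_cell m n h l -> 0 <= C i j h l)
  (Hfc : forall s, continuity_pt f s)
  (Hts : time_scale theta omega p)
  (HLsupp : forall v, Lam v -> supported m n v)
  (HLcomp : compact_set m n Lam)
  (HFL : forall v, Lam v -> Lam (F v))
  (HFc : continuous_on_set m n Lam F)
  (HMF : (exists v, Lam v /\ vnorm m n (F v) = MF) /\
         (forall v, Lam v -> vnorm m n (F v) <= MF))
  (Hz : in_Theta Lam F zeta) (Hz' : in_Theta Lam F zeta')
  (* (C1) *)
  (HC1 : forall i j k, is_cell m n i j -> dlt theta k * a i j <> 1)
  (* (C2): lambda = min_{(i,j)} lambda_ij > 0 *)
  (HC2 : forall i j, is_cell m n i j -> 0 < lam_of theta p (a i j))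
  (HK : forall i j, is_cell m n i j ->
          0 < K i j /\ u_bound theta (a i j) (K i j) (lam_of theta p (a i j)))
  (* (C3) *)
  (HC3 : 0 < Mf /\ forall s, Rabs (f s) <= Mf)
  (* (C4) *)
  (HC4 : 0 < Lf /\ forall s1 s2, Rabs (f s1 - f s2) <= Lf * Rabs (s1 - s2))
  (* (C5) *)
  (HC5 : (Mf + H0 m n r theta p a K C Mf MF * Lf) * cbar m n r theta p a K C < 1)
  (* x = phi_zeta, x' = phi_zeta~ : the solutions of (N_zeta) on T_0 bounded by H0 *)
  (Hx : solves_N m n r a C f theta zeta x)
  (Hxb : forall t, inT0 theta t -> vnorm m n (x t) <= H0 m n r theta p a K C Mf MF)
  (Hx' : solves_N m n r a C f theta zeta' x')
  (Hxb' : forall t, inT0 theta t -> vnorm m n (x' t) <= H0 m n r theta p a K C Mf MF)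
  (* limsup_{k -> oo} ||zeta_k - zeta~_k|| > 0 *)
  (Hls : exists e, 0 < e /\ forall N : Z, exists k : Z, (N <= k)%Z /\
            e < vnorm m n (vsub (zeta k) (zeta' k))) :
  exists eps0 eps1 : R, 0 < eps0 /\ 0 < eps1 /\
  exists J : nat -> R * R,
    (forall q, eps1 <= snd (J q) - fst (J q)) /\
    (forall q t, fst (J q) <= t <= snd (J q) -> inT0 theta t) /\
    (forall q1 q2 t, q1 <> q2 -> fst (J q1) <= t <= snd (J q1) ->
                     ~ (fst (J q2) <= t <= snd (J q2))) /\
    (forall q t, fst (J q) <= t <= snd (J q) -> eps0 < vnorm m n (vsub (x t) (x' t))).
Proof.
Proof.
  pose proof Hts as Hts0. destruct Hts0 as [Hinc [Hneg [Hom Hper]]].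
  set (H := H0 m n r theta p a K C Mf MF) in *.
  destruct HC3 as [HMf Hfb]. destruct HC4 as [HLf Hflip].
  assert (HH0 : 0 <= H).
  { eapply Rle_trans; [apply (vnorm_ge0 m n (x (theta 0%Z)))|]. apply Hxb.
    exists 0%Z. replace (2 * 0 - 1)%Z with (-1)%Z by lia. replace (2*0)%Z with 0%Z by lia. lra. }
  assert (Hxc : forall k t h l, theta (2*k-1)%Z <= t <= theta (2*k)%Z -> is_cell m n h l ->
     Rabs (x t h l) <= H /\ Rabs (x' t h l) <= H).
  { intros k t h l Ht Hc. split; eapply Rle_trans; try apply vnorm_ge; eauto;
    [apply Hxb| apply Hxb']; exists k; auto. }
  assert (Hzb : forall k h l, is_cell m n h l -> Rabs (zeta k h l) <= MF /\ Rabs (zeta' k h l) <= MF).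
  { intros k h l Hc. destruct HMF as [_ HMF2].
    destruct (Hz (k - 1)%Z) as [HL1 HF1]. destruct (Hz' (k - 1)%Z) as [HL2 HF2].
    replace (k - 1 + 1)%Z with k in HF1, HF2 by lia.
    split; eapply Rle_trans; try apply vnorm_ge; eauto; [rewrite HF1| rewrite HF2]; auto. }
  assert (HMF0 : 0 <= MF).
  { destruct HMF as [[v [_ Hv]] _]. rewrite <- Hv. apply vnorm_ge0. }
  set (A := max_cells m n a).
  set (SS := max_cells m n (fun i j => nb_sum m n r i j (C i j))).
  assert (HA : 0 <= A) by apply max_cells_ge0.
  assert (HS : 0 <= SS) by apply max_cells_ge0.
  set (B := A + SS * (Mf + Lf * H)).
  set (L := 2 * (A * H + SS * Mf * H + MF)).
  assert (HB : 0 <= B).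
  { unfold B. assert (0 <= Lf * H) by (apply Rmult_le_pos; lra).
    assert (0 <= SS * (Mf + Lf * H)) by (apply Rmult_le_pos; lra). lra. }
  assert (HL : 0 <= L).
  { unfold L. assert (0 <= A * H) by (apply Rmult_le_pos; lra).
    assert (0 <= SS * Mf * H) by (apply Rmult_le_pos; [apply Rmult_le_pos|]; lra). lra. }
  destruct Hls as [e [He Hls]].
  destruct (eta_lb theta omega p Hts) as [em [Hem Hemk]].
  set (eps0 := Rmin (e / (4 * (B + 1))) (e * em / 16)).
  assert (Heps0 : 0 < eps0).
  { apply Rmin_pos; [apply Rdiv_lt_0_compat; lra| ].
    assert (0 < e * em) by (apply Rmult_lt_0_compat; lra). lra. }
  set (rho := eps0 / (L + 1)).
  assert (Hrho : 0 < rho) by (apply Rdiv_lt_0_compat; lra).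
  set (eps1 := Rmin rho em).
  assert (Heps1 : 0 < eps1) by (apply Rmin_pos; lra).
  assert (Hkey : forall k, e < vnorm m n (vsub (zeta k) (zeta' k)) ->
    exists al be, eps1 <= be - al /\ theta (2*k-1)%Z <= al /\ be <= theta (2*k)%Z /\
      forall t, al <= t <= be -> eps0 < vnorm m n (vsub (x t) (x' t))).
  { intros k Hk.
    set (a0 := theta (2*k-1)%Z). set (b0 := theta (2*k)%Z).
    assert (Hab : em <= b0 - a0) by (specialize (Hemk k); unfold eta in Hemk; unfold a0, b0; lra).
    set (RHS := fun (y : R -> vec) (z : vec) t h l => - a h l * y t h l
       - nb_sum m n r h l (fun h' l' => C h l h' l' * f (y t h' l') * y t h l) + z h l).
    set (Dv := fun h l t => RHS x (zeta k) t h l - RHS x' (zeta' k) t h l).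
    assert (Hd : forall h l, is_cell m n h l -> forall t, a0 <= t <= b0 ->
       deriv_within a0 b0 (fun s => x s h l - x' s h l) t (Dv h l t)).
    { intros h l Hc t Ht. destruct (Hx k h l Hc) as [Hx1 _]. destruct (Hx' k h l Hc) as [Hx1' _].
      unfold Dv, RHS. apply dw_minus; [apply Hx1| apply Hx1']; auto. }
    assert (HRb : forall (y : R -> vec) z t h l, is_cell m n h l ->
       (forall h' l', is_cell m n h' l' -> Rabs (y t h' l') <= H) -> Rabs (z h l) <= MF ->
       Rabs (RHS y z t h l) <= A * H + SS * Mf * H + MF).
    { intros y z t h l Hc Hy Hzz. unfold RHS.
      assert (E1 : Rabs (nb_sum m n r h l (fun h' l' => C h l h' l' * f (y t h' l') * y t h l))
                  <= SS * Mf * H).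
      { eapply Rle_trans.
        { apply (nb_bound m n r h l _ (fun h' l' => C h l h' l' * (Mf * H))).
          intros h' l' Hc'. rewrite !Rabs_mult. rewrite (Rabs_right (C h l h' l'))
            by (apply Rle_ge; apply HC; auto).
          rewrite Rmult_assoc. apply Rmult_le_compat_l; [apply HC; auto|].
          apply Rmult_le_compat; try apply Rabs_pos; auto. }
        rewrite nb_scal. rewrite Rmult_assoc. apply Rmult_le_compat_r.
        { apply Rmult_le_pos; lra. }
        apply (max_cells_ge m n (fun i j => nb_sum m n r i j (C i j))); auto. }
      assert (E2 : Rabs (- a h l * y t h l) <= A * H).
      { rewrite Rabs_mult, Rabs_Ropp, Rabs_right by (apply Rle_ge; left; apply Ha; auto).
        apply Rmult_le_compat; auto. { left; apply Ha; auto. } apply Rabs_pos.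
        apply (max_cells_ge m n a); auto. }
      eapply Rle_trans; [apply Rabs_triang|]. eapply Rle_trans;
      [apply Rplus_le_compat_r; unfold Rminus; apply Rabs_triang|]. rewrite Rabs_Ropp. lra. }
    assert (HDb : forall h l, is_cell m n h l -> forall t, a0 <= t <= b0 -> Rabs (Dv h l t) <= L).
    { intros h l Hc t Ht. unfold Dv, L.
      eapply Rle_trans; [unfold Rminus; apply Rabs_triang|]. rewrite Rabs_Ropp.
      assert (Hb1 := HRb x (zeta k) t h l Hc (fun h' l' Hc' => proj1 (Hxc k t h' l' Ht Hc')) (proj1 (Hzb k h l Hc))).
      assert (Hb2 := HRb x' (zeta' k) t h l Hc (fun h' l' Hc' => proj2 (Hxc k t h' l' Ht Hc')) (proj2 (Hzb k h l Hc))).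
      lra. }
    assert (HLip : forall h l, is_cell m n h l -> forall s t, a0 <= s <= b0 -> a0 <= t <= b0 ->
       Rabs ((x s h l - x' s h l) - (x t h l - x' t h l)) <= L * Rabs (s - t)).
    { intros h l Hc s t Hs Ht.
      apply (dw_lip a0 b0 (fun s => x s h l - x' s h l) (Dv h l) L s t (Hd h l Hc) (HDb h l Hc) Hs Ht). }
    destruct (classic (exists h l t, is_cell m n h l /\ a0 <= t <= b0 /\
        2 * eps0 < Rabs (x t h l - x' t h l))) as [[h [l [t [Hc [Ht Hbig]]]]] | Hno].
    - exists (Rmax a0 (t - rho)), (Rmin b0 (t + rho)).
      assert (E1 : eps1 <= rho) by apply Rmin_l.
      assert (E2 : eps1 <= em) by apply Rmin_r.
      split; [unfold Rmax, Rmin; repeat destruct Rle_dec; lra|].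
      split; [apply Rmax_l|]. split; [apply Rmin_l|].
      intros s Hs.
      assert (Hs1 := Rmax_l a0 (t - rho)). assert (Hs2 := Rmax_r a0 (t - rho)).
      assert (Hs3 := Rmin_l b0 (t + rho)). assert (Hs4 := Rmin_r b0 (t + rho)).
      assert (HsI : a0 <= s <= b0) by lra.
      assert (Hst : Rabs (s - t) <= rho) by (apply Rabs_le; lra).
      assert (Hl := HLip h l Hc s t HsI Ht).
      assert (Hr : rho * (L + 1) = eps0) by (unfold rho; field; lra).
      assert (HLr : L * Rabs (s - t) <= L * rho) by (apply Rmult_le_compat_l; auto).
      assert (Htr := Rabs_triang_inv (x t h l - x' t h l) (x s h l - x' s h l)).
      rewrite (Rabs_minus_sym (x t h l - x' t h l)) in Htr.
      apply Rlt_le_trans with (Rabs (vsub (x s) (x' s) h l)); [|apply vnorm_ge; auto].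
      unfold vsub. nra.
    - assert (Hsmall : forall h l t, is_cell m n h l -> a0 <= t <= b0 ->
          Rabs (x t h l - x' t h l) <= 2 * eps0).
      { intros h l t Hc Ht. apply Rnot_lt_le. intros Hlt. apply Hno. exists h, l, t; auto. }
      exfalso.
      destruct (vnorm_gt m n _ e ltac:(lra) Hk) as [i [j [Hc Hij]]]. unfold vsub in Hij.
      set (d := zeta k i j - zeta' k i j) in *.
      assert (Hg : forall t, a0 <= t <= b0 -> Rabs (Dv i j t - d) <= B * (2 * eps0)).
      { intros t Ht.
        replace (Dv i j t - d) with (- a i j * (x t i j - x' t i j) -
          nb_sum m n r i j (fun h l => C i j h l * f (x t h l) * x t i j - C i j h l * f (x' t h l) * x' t i j))
          by (rewrite <- nb_minus; unfold Dv, RHS, d; ring).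
        assert (E1 : Rabs (nb_sum m n r i j (fun h l => C i j h l * f (x t h l) * x t i j
                      - C i j h l * f (x' t h l) * x' t i j)) <= SS * ((Mf + Lf * H) * (2 * eps0))).
        { eapply Rle_trans.
          { apply (nb_bound m n r i j _ (fun h l => C i j h l * ((Mf + Lf * H) * (2 * eps0)))).
            intros h l Hc'.
            replace (C i j h l * f (x t h l) * x t i j - C i j h l * f (x' t h l) * x' t i j) with
              (C i j h l * (f (x t h l) * (x t i j - x' t i j) + (f (x t h l) - f (x' t h l)) * x' t i j))
              by ring.
            rewrite Rabs_mult. rewrite (Rabs_right (C i j h l)) by (apply Rle_ge; apply HC; auto).
            apply Rmult_le_compat_l; [apply HC; auto|].
            eapply Rle_trans; [apply Rabs_triang|]. rewrite !Rabs_mult.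
            assert (F1 : Rabs (f (x t h l)) * Rabs (x t i j - x' t i j) <= Mf * (2 * eps0)).
            { apply Rmult_le_compat; try apply Rabs_pos; auto. }
            assert (F2 : Rabs (f (x t h l) - f (x' t h l)) * Rabs (x' t i j) <= (Lf * (2 * eps0)) * H).
            { apply Rmult_le_compat; try apply Rabs_pos.
              - eapply Rle_trans; [apply Hflip|]. apply Rmult_le_compat_l; [lra|]. apply Hsmall; auto.
              - apply (Hxc k t i j Ht Hc). }
            lra. }
          rewrite nb_scal. apply Rmult_le_compat_r.
          { apply Rmult_le_pos; [|lra]. assert (0 <= Lf * H) by (apply Rmult_le_pos; lra). lra. }
          apply (max_cells_ge m n (fun i j => nb_sum m n r i j (C i j))); auto. }
        assert (E2 : Rabs (- a i j * (x t i j - x' t i j)) <= A * (2 * eps0)).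
        { rewrite Rabs_mult, Rabs_Ropp, Rabs_right by (apply Rle_ge; left; apply Ha; auto).
          apply Rmult_le_compat; auto. { left; apply Ha; auto. } apply Rabs_pos.
          apply (max_cells_ge m n a); auto. }
        eapply Rle_trans; [apply Rabs_sub_le|].
        assert (B * (2 * eps0) = A * (2 * eps0) + SS * ((Mf + Lf * H) * (2 * eps0))) by (unfold B; ring). lra. }
      assert (HB2 : B * (2 * eps0) < e / 2).
      { assert (Q : eps0 <= e / (4 * (B + 1))) by apply Rmin_l.
        assert (Q2 : eps0 * (4 * (B + 1)) <= e).
        { apply Rle_trans with (e / (4 * (B + 1)) * (4 * (B + 1))).
          - apply Rmult_le_compat_r; lra.
          - right; field; lra. }
        nra. }
      assert (Hem2 : eps0 <= e * em / 16) by apply Rmin_r.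
      assert (Ha0 : a0 <= a0 <= b0) by lra. assert (Hb0 : a0 <= b0 <= b0) by lra.
      assert (S1 := Hsmall i j a0 Hc Ha0). assert (S2 := Hsmall i j b0 Hc Hb0).
      apply Rabs_le_between in S1. apply Rabs_le_between in S2.
      assert (Heem : 0 < e * em) by (apply Rmult_lt_0_compat; lra).
      assert (Hgab : e / 2 * em <= e / 2 * (b0 - a0)) by (apply Rmult_le_compat_l; lra).
      destruct (Rle_dec 0 d) as [Hd0|Hd0].
      + rewrite Rabs_right in Hij by lra.
        assert (Hlow : forall t, a0 <= t <= b0 -> e / 2 <= Dv i j t).
        { intros t Ht. specialize (Hg t Ht). apply Rabs_le_between in Hg. lra. }
        assert (Q := dw_lb a0 b0 (fun s => x s i j - x' s i j) (Dv i j) (e / 2) a0 b0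
                 (Hd i j Hc) Hlow ltac:(lra) ltac:(lra) ltac:(lra)).
        simpl in Q. lra.
      + rewrite Rabs_left in Hij by lra.
        assert (Hup : forall t, a0 <= t <= b0 -> Dv i j t <= - (e / 2)).
        { intros t Ht. specialize (Hg t Ht). apply Rabs_le_between in Hg. lra. }
        assert (Q := dw_ub a0 b0 (fun s => x s i j - x' s i j) (Dv i j) (- (e / 2)) a0 b0
                 (Hd i j Hc) Hup ltac:(lra) ltac:(lra) ltac:(lra)).
        simpl in Q. lra. }
  assert (Hch : forall N : Z, {kJ : Z * (R * R) | (N <= fst kJ)%Z /\
      eps1 <= snd (snd kJ) - fst (snd kJ) /\ theta (2 * fst kJ - 1)%Z <= fst (snd kJ) /\
      snd (snd kJ) <= theta (2 * fst kJ)%Z /\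
      forall t, fst (snd kJ) <= t <= snd (snd kJ) -> eps0 < vnorm m n (vsub (x t) (x' t))}).
  { intros N. apply constructive_indefinite_description.
    destruct (Hls N) as [k [Hk1 Hk2]]. destruct (Hkey k Hk2) as [al [be Hab]].
    exists (k, (al, be)). simpl. auto. }
  set (Ns := nat_rect (fun _ => Z) 0%Z (fun _ z => fst (proj1_sig (Hch z)) + 1)%Z).
  set (kq := fun q => fst (proj1_sig (Hch (Ns q)))).
  set (J := fun q => snd (proj1_sig (Hch (Ns q)))).
  assert (HJ : forall q, eps1 <= snd (J q) - fst (J q) /\ theta (2 * kq q - 1)%Z <= fst (J q) /\
      snd (J q) <= theta (2 * kq q)%Z /\
      forall t, fst (J q) <= t <= snd (J q) -> eps0 < vnorm m n (vsub (x t) (x' t))).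
  { intros q. unfold J, kq. destruct (proj2_sig (Hch (Ns q))) as [_ Hq]. exact Hq. }
  assert (Hmon1 : forall q, (kq q < kq (S q))%Z).
  { intros q. unfold kq at 2. destruct (proj2_sig (Hch (Ns (S q)))) as [Hq _].
    assert (E : Ns (S q) = (kq q + 1)%Z) by reflexivity.
    lia. }
  assert (Hmon : forall q1 q2, (q1 < q2)%nat -> (kq q1 < kq q2)%Z).
  { intros q1 q2 Hq. induction Hq. apply Hmon1. specialize (Hmon1 m0). lia. }
  exists eps0, eps1. split; auto. split; auto. exists J.
  split; [intros q; apply HJ|]. split.
  { intros q t Ht. exists (kq q). destruct (HJ q) as [_ [H1 [H2 _]]]. lra. }
  split; [|intros q t Ht; apply (HJ q); auto].
  intros q1 q2 t Hne Ht1 Ht2.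
  destruct (HJ q1) as [_ [A1 [B1 _]]]. destruct (HJ q2) as [_ [A2 [B2 _]]].
  destruct (Nat.lt_gt_cases q1 q2) as [[Hl|Hl] _]; [auto| |].
  - apply (int_disj theta omega p Hts (kq q1) (kq q2) t (Hmon _ _ Hl)); lra.
  - apply (int_disj theta omega p Hts (kq q2) (kq q1) t (Hmon _ _ Hl)); lra.
Qed.
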